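(* Let $n\ge 2$ and let $\mathcal{F}$ be an induced-$\mathcal{D}_2$-saturated family in $\mathcal{B}_n$. If $\emptyset\in\mathcal{F}$ or $[n]\in\mathcal{F}$, then $|\mathcal{F}|\ge n+1$.
   Context: $\mathcal{B}_n$ denotes the Boolean lattice $(2^{[n]},\subseteq)$. A family $\mathcal{F}\subseteq 2^{[n]}$ (ordered by inclusion) is induced-$\mathcal{P}$-saturated if it contains no induced copy of $\mathcal{P}$ (an injection $f$ with $u\le v\iff f(u)\subseteq f(v)$) but every family $\mathcal{F}'$ with $\mathcal{F}\subsetneq\mathcal{F}'\subseteq 2^{[n]}$ contains one. $\mathcal{D}_2$ (the diamond) is the four-element poset $\{A,B,C,D\}$ with $A<B<D$, $A<C<D$, and $B,C$ incomparable. *)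

(* Defs.v *)
From mathcomp Require Import all_boot.
Set Implicit Arguments. Unset Strict Implicit. Unset Printing Implicit Defensive.

(* The diamond poset D_2 on 'I_4: 0 = A (bottom), 1 = B, 2 = C, 3 = D (top).
   diamond_le u v  <->  u <= v in D_2. *)
Definition diamond_le (u v : 'I_4) : bool :=
  (u == v) || (val u == 0) || (val v == 3).

Definition has_induced_diamond (n : nat) (F : {set {set 'I_n}}) : Prop :=
  exists f : 'I_4 -> {set 'I_n},
    [/\ injective f, (forall u, f u \in F) &
        (forall u v, diamond_le u v = (f u \subset f v))].

Definition induced_diamond_saturated (n : nat) (F : {set {set 'I_n}}) : Prop :=
  ~ has_induced_diamond F /\
  (forall F' : {set {set 'I_n}}, F \proper F' -> has_induced_diamond F').

(* Main.v *)
Require Import Defs.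
From mathcomp Require Import all_boot zify.
Set Implicit Arguments. Unset Strict Implicit. Unset Printing Implicit Defensive.

Definition d0 : 'I_4 := @Ordinal 4 0 isT.
Definition d1 : 'I_4 := @Ordinal 4 1 isT.
Definition d2 : 'I_4 := @Ordinal 4 2 isT.
Definition d3 : 'I_4 := @Ordinal 4 3 isT.

Lemma I4_cases (u : 'I_4) : [\/ u = d0, u = d1, u = d2 | u = d3].
Proof.
case: u => [[|[|[|[|m]]]] Hm].
- by constructor 1; apply: val_inj.
- by constructor 2; apply: val_inj.
- by constructor 3; apply: val_inj.
- by constructor 4; apply: val_inj.
- by [].
Qed.

Lemma dl_antisym u v : diamond_le u v -> diamond_le v u -> u = v.
Proof.
by case: (I4_cases u) => ->; case: (I4_cases v) => ->.
Qed.

Lemma dl_rev u v : diamond_le (rev_ord v) (rev_ord u) = diamond_le u v.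
Proof.
by case: (I4_cases u) => ->; case: (I4_cases v) => ->; rewrite /diamond_le /= -?val_eqE.
Qed.

Section S.
Variable n : nat.
Implicit Types (F : {set {set 'I_n}}) (A B C D : {set 'I_n}).

Lemma mk_diamond F A B C D :
  A \in F -> B \in F -> C \in F -> D \in F ->
  A \proper B -> A \proper C -> B \proper D -> C \proper D ->
  ~~ (B \subset C) -> ~~ (C \subset B) -> has_induced_diamond F.
Proof.
move=> AF BF CF DF AB AC BD CD nBC nCB.
have AD : A \proper D by apply: proper_trans AB BD.
move: AB AC BD CD AD; rewrite !properE => /andP[AB BA] /andP[AC CA] /andP[BD DB] /andP[CD DC] /andP[AD DA].
pose f (u : 'I_4) := match val u with 0 => A | 1 => B | 2 => C | _ => D end.
have ord : forall u v, diamond_le u v = (f u \subset f v).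
  move=> u v; case: (I4_cases u) => ->; case: (I4_cases v) => ->;
  rewrite /f /diamond_le /= ?subxx //; apply/esym/negbTE => //.
exists f; split.
- move=> u v E; apply: dl_antisym; by rewrite ord E.
- by move=> u; case: (I4_cases u) => ->.
- exact: ord.
Qed.
End S.

Section S.
Variable n : nat.
Implicit Types (F : {set {set 'I_n}}) (A B C D Y : {set 'I_n}).

Definition cF F := [set ~: X | X in F].

Lemma memcF F X : (X \in cF F) = (~: X \in F).
Proof.
apply/imsetP/idP => [[Y HY ->]|H]; first by rewrite setCK.
by exists (~: X); rewrite ?setCK.
Qed.

Lemma cFK F : cF (cF F) = F.
Proof. by apply/setP => X; rewrite !memcF setCK. Qed.

Lemma card_cF F : #|cF F| = #|F|.
Proof. by rewrite card_imset //; apply: setC_inj. Qed.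

Lemma has_cF F : has_induced_diamond F -> has_induced_diamond (cF F).
Proof.
move=> [f [fi fF fo]].
exists (fun u => ~: f (rev_ord u)); split.
- by move=> u v /setC_inj /fi /rev_ord_inj.
- by move=> u; rewrite memcF setCK.
- by move=> u v; rewrite setCS -fo dl_rev.
Qed.

Lemma sat_cF F : induced_diamond_saturated F -> induced_diamond_saturated (cF F).
Proof.
move=> [nh sat]; split.
- by move/has_cF; rewrite cFK.
- move=> F' P; rewrite -(cFK F'); apply: has_cF; apply: sat.
  move: P; rewrite !properEcard card_cF => /andP[/subsetP S L].
  apply/andP; split; last by rewrite card_cF.
  by apply/subsetP => X XF; rewrite memcF; apply: S; rewrite memcF setCK.
Qed.

Lemma add_diamond F Y : induced_diamond_saturated F -> Y \notin F ->
  exists f : 'I_4 -> {set 'I_n}, exists u0,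
    [/\ f u0 = Y, (forall v, v != u0 -> f v \in F) &
        (forall u v, diamond_le u v = (f u \subset f v))].
Proof.
move=> [nh sat] YF.
have P : F \proper Y |: F.
  rewrite properE subsetUr; apply/subsetPn; exists Y => //; exact: setU11.
have [f [fi fF fo]] := sat _ P.
case: (boolP [exists u, f u == Y]) => [/existsP [u0 /eqP Hu0]|/existsPn H]; last first.
  case: nh; exists f; split=> // u; have := fF u; rewrite in_setU1.
  by rewrite (negbTE (H u)).
exists f, u0; split=> // v vu.
have := fF v; rewrite in_setU1 -Hu0 (inj_eq fi) (negbTE vu); exact.
Qed.
End S.

Lemma arith1 n p y z : z <= n -> y < z -> (p * n.+1 + (n - y) <= p * n.+1 + (n - z)) -> False.
Proof. lia. Qed.
Lemma arith2 n p c z d : d <= n -> z <= n -> p < c -> (c * n.+1 + (n - d) <= p * n.+1 + (n - z)) -> False.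
Proof. move=> h1 h2 h3; have : p.+1 * n.+1 <= c * n.+1 by rewrite leq_mul2r h3 orbT. lia. Qed.

Section S.
Variable n : nat.
Implicit Types (F : {set {set 'I_n}}) (A B C D Y Z : {set 'I_n}).

Lemma key F a : induced_diamond_saturated F -> set0 \in F ->
  exists Z, [/\ Z \in F, a \in Z & Z :\ a \in F].
Proof.
move=> sat F0; have nh : ~ has_induced_diamond F := sat.1.
case: (boolP ([set a] \in F)) => Ha.
  by exists [set a]; rewrite set11 setDv.
have [Z0 [Z0F aZ0]] : exists Z0, Z0 \in F /\ a \in Z0.
  have [f [u0 [fu0 fF fo]]] := add_diamond sat Ha.
  have gen : u0 != d3 -> exists Z0, Z0 \in F /\ a \in Z0.
    move=> ne; exists (f d3); split; first by apply: fF; rewrite eq_sym.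
    have : f u0 \subset f d3 by rewrite -fo /diamond_le orbT.
    by rewrite fu0 sub1set.
  case: (I4_cases u0) => Eu; try (by apply: gen; rewrite Eu -val_eqE).
  have h1 : f d1 \subset [set a] by rewrite -fu0 -fo Eu.
  have h2 : f d2 \subset [set a] by rewrite -fu0 -fo Eu.
  have n12 : ~~ (f d1 \subset f d2) by rewrite -fo.
  have n21 : ~~ (f d2 \subset f d1) by rewrite -fo.
  move: h1 h2; rewrite !subset1 => /orP[/eqP e1|/eqP e1] /orP[/eqP e2|/eqP e2].
  - by move: n12; rewrite e1 e2 subxx.
  - by move: n21; rewrite e2 sub0set.
  - by move: n12; rewrite e1 sub0set.
  - by move: n12; rewrite e1 e2 subxx.
pose cond (p : {set 'I_n} * {set 'I_n}) :=
  [&& p.1 \in F, p.2 \in F, p.1 \proper p.2, a \in p.2 & a \notin p.1].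
pose w (p : {set 'I_n} * {set 'I_n}) := #|p.1| * n.+1 + (n - #|p.2|).
have c0 : cond (set0, Z0).
  by rewrite /cond /= F0 Z0F aZ0 in_set0 proper0 andbT; apply/set0Pn; exists a.
case: (@arg_maxnP _ (set0, Z0) cond w c0) => [[P Z]] /and5P[/= PF ZF PZ aZ aP] mx.
have cardZ : forall X : {set 'I_n}, #|X| <= n.
  by move=> X; have := max_card X; rewrite card_ord.
set Y := a |: P.
have PY : P \proper Y.
  rewrite properE subsetUr; apply/subsetPn; exists a => //; exact: setU11.
have YZ : Y \subset Z by rewrite subUset sub1set aZ (proper_sub PZ).
have aY : a \in Y by exact: setU11.
case: (eqVneq Y Z) => [eYZ|YnZ]; first by exists Z; split => //; rewrite -eYZ setU1K.
have YpZ : Y \proper Z by rewrite properEneq YnZ YZ.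
have nY : Y \notin F.
  apply/negP => YF; have := mx (P, Y); rewrite /cond /= PF YF PY aY aP /w /=.
  move=> /(_ isT); have := proper_card YpZ; have := cardZ Z.
  move: #|P| #|Y| #|Z|; exact: arith1.
have [f [u0 [fu0 fF fo]]] := add_diamond sat nY.
have pr : forall u v, diamond_le u v -> ~~ diamond_le v u -> f u \proper f v.
  by move=> u v h1 h2; rewrite properE -!fo h1 h2.
have caseB : forall A C D, A \in F -> C \in F -> D \in F -> A \proper Y ->
    A \proper C -> Y \proper D -> C \proper D -> ~~ (Y \subset C) ->
    ~~ (C \subset Y) -> False.
  move=> A C D AF CF DF AY AC YD CD nYC nCY.
  have PsY := proper_sub PY.
  case: (boolP (P \subset C)) => PC.
    have aC : a \notin C.
      by apply: contra nYC => aC; rewrite subUset sub1set aC PC.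
    have PC' : P \proper C.
      rewrite properE PC; apply: contra nCY => CP; exact: subset_trans CP PsY.
    have := mx (C, D); rewrite /cond /= CF DF CD aC andbT.
    have -> : a \in D by exact: (subsetP (proper_sub YD)).
    move=> /(_ isT); rewrite /w /=.
    have := proper_card PC'; have := cardZ Z; have := cardZ D.
    move: #|P| #|C| #|Z| #|D|; exact: arith2.
  apply: nh; apply: (@mk_diamond _ F set0 P C D) => //.
  - by rewrite proper0; apply: contraNneq PC => ->; rewrite sub0set.
  - exact: sub_proper_trans (sub0set A) AC.
  - exact: proper_trans PY YD.
  - apply: contra nCY => CP; exact: subset_trans CP PsY.
case: (I4_cases u0) => Eu; subst u0; exfalso.
- apply: nh; apply: (@mk_diamond _ F set0 (f d1) (f d2) (f d3)); try exact: F0; try (apply: fF; by rewrite -val_eqE).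
  + exact: (sub_proper_trans (sub0set (f d0)) (pr d0 d1 isT isT)).
  + exact: (sub_proper_trans (sub0set (f d0)) (pr d0 d2 isT isT)).
  + by apply: pr.
  + by apply: pr.
  + by rewrite -fo.
  + by rewrite -fo.
- apply: (caseB (f d0) (f d2) (f d3)); try (apply: fF; by rewrite -val_eqE);
  rewrite -?fu0 -?fo //; by apply: pr.
- apply: (caseB (f d0) (f d1) (f d3)); try (apply: fF; by rewrite -val_eqE);
  rewrite -?fu0 -?fo //; by apply: pr.
- apply: nh; apply: (@mk_diamond _ F (f d0) (f d1) (f d2) Z); try exact: ZF; try (apply: fF; by rewrite -val_eqE).
  + by apply: pr.
  + by apply: pr.
  + by apply: proper_sub_trans (pr d1 d3 isT isT) _; rewrite fu0.
  + by apply: proper_sub_trans (pr d2 d3 isT isT) _; rewrite fu0.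
  + by rewrite -fo.
  + by rewrite -fo.
Qed.
End S.

Lemma main0 n (F : {set {set 'I_n}}) : induced_diamond_saturated F -> set0 \in F -> n.+1 <= #|F|.
Proof.
move=> sat F0; have nh : ~ has_induced_diamond F := sat.1.
pose g (a : 'I_n) := odflt set0 [pick Z | (Z \in F) && (a \in Z) && (Z :\ a \in F)].
have gP : forall a, [/\ g a \in F, a \in g a & g a :\ a \in F].
  move=> a; rewrite /g; case: pickP => [Z /andP[/andP[-> ->] ->] //|H].
  have [Z [ZF aZ ZaF]] := key a sat F0.
  by have := H Z; rewrite ZF aZ ZaF.
have ginj : injective g.
  move=> a b E; case: (eqVneq a b) => // ab; exfalso; apply: nh.
  have [ZF aZ ZaF] := gP a; have [_ bZ ZbF] := gP b; rewrite -E in bZ ZbF.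
  have bZa : b \in g a :\ a by rewrite in_setD1 eq_sym ab bZ.
  have aZb : a \in g a :\ b by rewrite in_setD1 ab aZ.
  apply: (@mk_diamond _ F set0 (g a :\ a) (g a :\ b) (g a)) => //.
  - by rewrite proper0; apply/set0Pn; exists b.
  - by rewrite proper0; apply/set0Pn; exists a.
  - exact: properD1.
  - exact: properD1.
  - by apply/subsetPn; exists b => //; rewrite !inE eqxx.
  - by apply/subsetPn; exists a => //; rewrite !inE eqxx.
have sub : g @: [set: 'I_n] \subset F :\ set0.
  apply/subsetP => Z /imsetP[a _ ->]; have [ZF aZ _] := gP a.
  by rewrite in_setD1 ZF andbT; apply/set0Pn; exists a.
rewrite (cardsD1 set0 F) F0 add1n ltnS.
by have := subset_leq_card sub; rewrite card_imset // cardsT card_ord.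
Qed.

Theorem lemma3p3 (n : nat) (F : {set {set 'I_n}}) :
  2 <= n -> induced_diamond_saturated F ->
  (set0 \in F) || ([set: 'I_n] \in F) ->
  n.+1 <= #|F|.
Proof.
move=> _ sat /orP[F0|FT]; first exact: main0.
rewrite -card_cF; apply: main0; first exact: sat_cF.
by rewrite memcF setC0.
Qed.
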